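(* Let $v\geq 8$, let $C_v$ be the configuration on $\mathbb{Z}_v$ with blocks $\{m,m+1,m+3\}$, $m\in\mathbb{Z}_v$, and let $S$ be a blocking set of $C_v$, with associated circular binary word $\mathbf{b}(S)=b_0\cdots b_{v-1}$ ($b_i=1$ iff $i\in S$). Then either (a) $\mathbf{b}(S)$ alternates $0101\cdots$ or $1010\cdots$ (which is possible only if $v$ is even), or (b) $\mathbf{b}(S)$ consists of runs of 0s and runs of 1s each of length 2 or 3.
   Context: A blocking set is a subset $Q$ of the points such that every block contains at least one point of $Q$ and at least one point not in $Q$. A circular binary word of length $n$ is a sequence $b_0,\dots,b_{n-1}\in\{0,1\}$ with indices taken modulo $n$. A run of length $k$ is a maximal sequence of $k$ cyclically consecutive equal digits (bounded on both sides by the other digit). *)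

(* Defs.v *)
From mathcomp Require Import all_boot.
Set Implicit Arguments. Unset Strict Implicit. Unset Printing Implicit Defensive.

Definition block (v : nat) (m : 'I_v) : {set 'I_v} :=
  [set x : 'I_v | [|| val x == m %% v, val x == (m + 1) %% v
                    | val x == (m + 3) %% v]].

Definition blocking_set (v : nat) (Q : {set 'I_v}) : Prop :=
  forall m : 'I_v, (block m :&: Q != set0) /\ (block m :\: Q != set0).

Definition word (v : nat) (S : {set 'I_v}) (i : nat) : bool :=
  [exists x in S, val x == i %% v].

Definition is_run (v : nat) (b : nat -> bool) (i k : nat) : Prop :=
  0 < k /\ b (i + v - 1) != b i /\
  (forall j, j < k -> b (i + j) = b i) /\ b (i + k) != b i.

Definition alternating (v : nat) (b : nat -> bool) : Prop :=
  forall i, i < v -> b (i + 1) != b i.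

(* (b): the word consists of runs (it is not constant), each of length 2 or 3. *)
Definition runs_2_or_3 (v : nat) (b : nat -> bool) : Prop :=
  (exists i, i < v /\ b (i + 1) != b i) /\
  (forall i k, i < v -> is_run v b i k -> k = 2 \/ k = 3).

(* Main.v *)
Require Import Defs.
From mathcomp Require Import all_boot.
From mathcomp Require Import zify.

Section Abs.
Variable (v : nat) (b : nat -> bool).
Hypothesis Hper : forall n, b (n + v) = b n.
Hypothesis H2 : forall n, ~ (b n = b (n + 1) /\ b (n + 1) = b (n + 3)).

Definition P j := b j != b (j + 1) /\ b (j + 1) != b (j + 2).

Lemma stepP j : P (j + 1) -> P j.
Proof.
rewrite /P -!addnA; have -> : 1 + 1 = 2 by [].
have -> : 1 + 2 = 3 by []. move=> [h1 h2]; split=> //.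
have := H2 j; move: h1 h2; case: (b j); case: (b (j+1)); case: (b (j+2));
  case: (b (j+3)) => //= _ _ h; exfalso; exact: h (conj erefl erefl).
Qed.

Lemma downP j t : P (j + t) -> P j.
Proof.
elim: t j => [|t IH] j; first by rewrite addn0.
move=> h; apply: IH; apply: stepP; by rewrite -addnA addn1.
Qed.

Lemma abs_main : 8 <= v -> alternating v b \/ runs_2_or_3 v b.
Proof.
move=> hv.
case: (boolP [exists i : 'I_v, (b (i + v - 1) != b i) && (b (i + 1) != b i)]).
  move/existsP=> [i /andP [h1 h2]]; left=> k hk.
  have base : P (i + v - 1).
    have e : i + v - 1 + 1 = i + v by lia.
    have e2 : i + v - 1 + 2 = i + 1 + v by lia.
    rewrite /P e e2 !Hper; split=> //; by rewrite eq_sym.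
  have := @downP k (i + v - 1 - k); rewrite subnKC; last by lia.
  by move=> /(_ base) [h _]; rewrite eq_sym.
move/existsPn=> hn; right; split.
  have := H2 0; case E0: (b 0 == b 1).
    case E1: (b 1 == b 2).
      move=> h; exists 2; split; first by lia.
      apply/negP=> /eqP E; apply: h; split; first by apply/eqP.
      by move/eqP: E1 => ->.
    move=> _; exists 1; split; first by lia.
    by rewrite eq_sym E1.
  move=> _; exists 0; split; first by lia.
  by rewrite eq_sym E0.
move=> i k hi [hk [h1 [h2 h3]]].
have k1 : k != 1.
  apply/eqP=> E; subst k.
  have := hn (Ordinal hi); rewrite /= h1 /=; by rewrite (negbTE h3).
have k4 : k < 4.
  rewrite ltnNge; apply/negP=> k4.
  apply: (H2 i); rewrite !h2 //; lia.
lia.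
Qed.
End Abs.

Lemma wordE (v : nat) (S : {set 'I_v}) (x : 'I_v) n :
  val x = n %% v -> word S n = (x \in S).
Proof.
move=> e; apply/existsP/idP.
  by move=> [y /andP [yS /eqP ey]]; have -> : x = y by apply: val_inj; rewrite e ey.
by move=> xS; exists x; rewrite xS e eqxx.
Qed.

Theorem mainTheorem5 (v : nat) (S : {set 'I_v}) :
  8 <= v -> blocking_set S ->
  alternating v (word S) \/ runs_2_or_3 v (word S).
Proof.
move=> hv hB.
have v0 : 0 < v by lia.
apply: abs_main => //.
  by move=> n; rewrite /word modnDr.
move=> n [e1 e2].
pose m := Ordinal (ltn_pmod n v0).
have hx : forall x, x \in block m -> (x \in S) = word S n.
  move=> x; rewrite inE /= => /or3P [] /eqP ex.
  - by rewrite (@wordE v S x n) // -modn_mod -ex.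
  - by rewrite e1 (@wordE v S x (n+1)) // -modnDml -ex.
  - by rewrite e1 e2 (@wordE v S x (n+3)) // -modnDml -ex.
have [h1 h2] := hB m.
case/set0Pn: h1 => x; rewrite inE => /andP [xb xS].
case/set0Pn: h2 => y; rewrite inE => /andP [yS yb].
by move: xS yS; rewrite (hx x xb) (hx y yb) => ->.
Qed.
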